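(* Let $G$ be a graph obtained by taking a disjoint union of complete graphs $K_{n_1}\cup\cdots\cup K_{n_\ell}$ with each $n_i\ge 2$ and adding edges between distinct cliques such that the added edges form a matching. Then $G$ is well-bicovered.
   Context: All graphs are finite and simple; ''subgraph'' means induced subgraph. A graph is well-bicovered if every vertex-inclusion-maximal induced bipartite subgraph has the same order. *)

(* Defs.v *)
(* A simple graph on a finite vertex type T is a symmetric
   irreflexive relation e : rel T. "Subgraph" = induced subgraph, determined
   by its vertex set S : {set T}. *)
From mathcomp Require Import all_boot.
Set Implicit Arguments. Unset Strict Implicit. Unset Printing Implicit Defensive.

Definition simple_graph (T : finType) (e : rel T) : Prop :=
  symmetric e /\ irreflexive e.

Definition independent (T : finType) (e : rel T) (A : {set T}) : bool :=
  [forall x in A, forall y in A, ~~ e x y].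

Definition ind_bipartite (T : finType) (e : rel T) (S : {set T}) : bool :=
  [exists A : {set T}, (A \subset S) && independent e A && independent e (S :\: A)].

Definition well_bicovered (T : finType) (e : rel T) : Prop :=
  forall S1 S2 : {set T},
    maxset (ind_bipartite e) S1 -> maxset (ind_bipartite e) S2 -> #|S1| = #|S2|.

(* e is obtained from a disjoint union of cliques (the blocks of P), each of
   size >= 2, by adding edges between distinct cliques that form a matching.
   (Edges only exist inside blocks or as the added matching edges.) *)
Definition cliques_plus_matching (T : finType) (e : rel T) : Prop :=
  exists P : {set {set T}},
    [/\ partition P [set: T],
        (forall B, B \in P -> 2 <= #|B|),
        (forall x y, pblock P x = pblock P y -> x != y -> e x y) &
        (forall x y z, e x y -> e x z ->
           pblock P x != pblock P y -> pblock P x != pblock P z -> y = z)].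

(* Main.v *)
Require Import Defs.
From mathcomp Require Import all_boot.
Set Implicit Arguments. Unset Strict Implicit. Unset Printing Implicit Defensive.

Definition fnl (T : finType) (S : {set T}) (r : rel T) :=
  forall a b c, a \in S -> b \in S -> c \in S -> r a b -> r a c -> b = c.

Lemma fnl_sub (T : finType) (S S' : {set T}) r : S' \subset S -> fnl S r -> fnl S' r.
Proof. move=> /subsetP sub f a b c aS bS cS; apply: f; exact: sub. Qed.

Lemma two_nbrs (T : finType) (S : {set T}) (r1 r2 : rel T) x p q :
  fnl S r1 -> fnl S r2 -> x \in S -> p \in S -> q \in S ->
  r1 x p || r2 x p -> r1 x q || r2 x q -> p != q ->
  exists y x', [/\ y \in S, x' \in S, y != x', r1 x y & r2 x x'].
Proof.
move=> f1 f2 xS pS qS Ep Eq pq.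
case r1p: (r1 x p); case r2q: (r2 x q).
- by exists p, q.
- move: Eq; rewrite r2q orbF => r1q; by rewrite (f1 _ _ _ xS pS qS r1p r1q) eqxx in pq.
- case r1q: (r1 x q).
  + have r2p : r2 x p by move: Ep; rewrite r1p.
    exists q, p; split => //; by rewrite eq_sym.
  + have r2p : r2 x p by move: Ep; rewrite r1p.
    by rewrite (f2 _ _ _ xS pS qS r2p r2q) eqxx in pq.
- move: Ep Eq; rewrite r1p r2q /= => r2p. case r1q: (r1 x q) => // _.
  exists q, p; split => //; by rewrite eq_sym.
Qed.

Lemma bip2 (T : finType) (n : nat) : forall (S : {set T}) (r1 r2 : rel T), #|S| <= n ->
  symmetric r1 -> symmetric r2 -> irreflexive r1 -> irreflexive r2 ->
  fnl S r1 -> fnl S r2 ->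
  exists c : T -> bool, forall a b, a \in S -> b \in S -> r1 a b || r2 a b -> c a != c b.
Proof.
elim: n => [|n IH] S r1 r2 hS s1 s2 i1 i2 f1 f2.
  exists (fun _ => true) => a b aS.
  by move: hS; rewrite leqn0 => /eqP/cards0_eq Se; rewrite Se in_set0 in aS.
case: (boolP [exists x in S, [forall a in S, [forall b in S,
   (r1 x a || r2 x a) ==> (r1 x b || r2 x b) ==> (a == b)]]]).
- move=> /exists_inP [x xS /forall_inP H].
  have hS' : #|S :\ x| <= n.
    by move: hS; rewrite (cardsD1 x S) xS add1n ltnS.
  have [c Hc] := IH (S :\ x) r1 r2 hS' s1 s2 i1 i2
     (fnl_sub (subsetDl _ _) f1) (fnl_sub (subsetDl _ _) f2).
  pose c' := fun v => if v == x then
     (if [pick a in S | r1 x a || r2 x a] is Some a then ~~ c a else true) else c v.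
  have key : forall b, b \in S -> r1 x b || r2 x b -> c' x != c' b.
    move=> b bS Eb.
    have bx : b != x by apply/eqP => bx; rewrite bx i1 i2 in Eb.
    rewrite /c' eqxx (negbTE bx).
    case: pickP => [a /andP [aS Ea]|].
      have := H a aS => /forall_inP /(_ b bS). rewrite Ea Eb /= => /eqP ->.
      by case: (c b).
    by move=> /(_ b); rewrite bS Eb.
  exists c' => a b aS bS Eab.
  case: (eqVneq a x) => [ex|ax]; first by subst a; apply: key.
  case: (eqVneq b x) => [bx|bx].
    rewrite eq_sym; subst b; apply: key => //; by rewrite s1 s2.
  rewrite /c' (negbTE ax) (negbTE bx); apply: Hc => //; by rewrite in_setD1 ?ax ?bx.
- move/exists_inPn => H.
  case: (set_0Vmem S) => [->|[x xS]].
    by exists (fun _ => true) => a b; rewrite in_set0.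
  have nb : forall v, v \in S -> exists y v', [/\ y \in S, v' \in S, y != v', r1 v y & r2 v v'].
    move=> v vS; have := H v vS => /forall_inPn [p pS /forall_inPn [q qS]].
    rewrite !negb_imply => /and3P [Ep Eq pq].
    exact: (two_nbrs f1 f2 vS pS qS Ep Eq pq).
  have [y [x' [yS x'S yx' r1xy r2xx']]] := nb x xS.
  have [z [w [zS wS zw r1x'z r2x'w]]] := nb x' x'S.
  have wx : w = x by apply: (f2 x' w x x'S wS xS r2x'w); rewrite s2.
  subst w. have zx := zw.
  have xx' : x' != x by apply/eqP => e; rewrite e i2 in r2xx'.
  have yx : y != x by apply/eqP => e; rewrite e i1 in r1xy.
  have zx' : z != x' by apply/eqP => e; rewrite e i1 in r1x'z.
  have yz : y != z.
    apply/eqP => e; subst z.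
    have : x = x' by apply: (f1 y x x' yS xS x'S); rewrite s1.
    by move=> e; rewrite e eqxx in xx'.
  pose S' := S :\ x :\ x'.
  have inS' v : (v \in S') = [&& v != x', v != x & v \in S] by rewrite !in_setD1.
  have hS' : #|S'| <= n.
    move: hS; rewrite (cardsD1 x S) xS (cardsD1 x' (S :\ x)) in_setD1 xx' x'S.
    rewrite /S' => h. by apply: leq_trans (leqnSn _) _; rewrite -ltnS; apply: leq_trans h; rewrite !add1n.
  pose r1' := [rel a b | r1 a b || ((a == y) && (b == z)) || ((a == z) && (b == y))].
  have s1' : symmetric r1'.
    move=> a b /=; rewrite s1 -!orbA; congr (_ || _).
    by rewrite orbC (andbC (a == z)) (andbC (a == y)).
  have i1' : irreflexive r1'.
    move=> a /=; rewrite i1 /=.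
    by case: (eqVneq a y) => [->|ay]; rewrite ?(negbTE yz) ?(negbTE ay) ?andbF.
  have f1' : fnl S' r1'.
    have yS' : y \in S' by rewrite inS' yx' yx.
    have zS' : z \in S' by rewrite inS' zx' zx.
    have ny : forall b, b \in S' -> ~~ r1 y b.
      move=> b; rewrite inS' => /and3P [_ bx bS]; apply/negP => ryb.
      have : b = x by apply: (f1 y b x yS bS xS ryb); rewrite s1.
      by move=> e; rewrite e eqxx in bx.
    have nz : forall b, b \in S' -> ~~ r1 z b.
      move=> b; rewrite inS' => /and3P [bx' _ bS]; apply/negP => ryb.
      have : b = x' by apply: (f1 z b x' zS bS x'S ryb); rewrite s1.
      by move=> e; rewrite e eqxx in bx'.
    move=> a b c aS bS cS /=.
    case: (eqVneq a y) => [->|ay].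
      rewrite (negbTE (ny b bS)) (negbTE (ny c cS)) /= (negbTE yz) /= !orbF.
      by move=> /eqP -> /eqP ->.
    case: (eqVneq a z) => [->|az].
      rewrite (negbTE (nz b bS)) (negbTE (nz c cS)) /=.
      by move=> /eqP -> /eqP ->.
    rewrite ?(negbTE ay) ?(negbTE az) /= ?orbF; move: aS bS cS; rewrite !inS' => /and3P[_ _ aS0] /and3P[_ _ bS0] /and3P[_ _ cS0]; exact: f1.
  have [c Hc] := IH S' r1' r2 hS' s1' s2 i1' i2 f1' (fnl_sub (subset_trans (subsetDl _ _) (subsetDl _ _)) f2).
  have cyz : c y != c z.
    apply: Hc; rewrite ?inS' ?yx' ?yx ?zx' ?zx ?yS ?zS //=; by rewrite !eqxx orbT.
  pose c' := fun v => if v == x then ~~ c y else if v == x' then c y else c v.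
  have c'y : c' y = c y by rewrite /c' (negbTE yx) (negbTE yx').
  have c'z : c' z = c z by rewrite /c' (negbTE zx) (negbTE zx').
  have c'x : c' x = ~~ c y by rewrite /c' eqxx.
  have c'x' : c' x' = c y by rewrite /c' (negbTE xx') eqxx.
  have key : forall a b, a \in S -> b \in S -> (a == x) || (a == x') -> r1 a b || r2 a b -> c' a != c' b.
    move=> a b aS bS /orP [/eqP ->|/eqP ->] /orP [] E.
    + by rewrite (f1 x b y xS bS yS E r1xy) c'x c'y; case: (c y).
    + by rewrite (f2 x b x' xS bS x'S E r2xx') c'x c'x'; case: (c y).
    + by rewrite (f1 x' b z x'S bS zS E r1x'z) c'x' c'z.
    + by rewrite (f2 x' b x x'S bS xS E) ?c'x ?c'x' 1?s2 //; case: (c y).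
  exists c' => a b aS bS Eab.
  case: (boolP ((a == x) || (a == x'))) => ha; first exact: key.
  case: (boolP ((b == x) || (b == x'))) => hb.
    rewrite eq_sym; apply: key => //; by rewrite s1 s2.
  move: ha hb; rewrite !negb_or => /andP [ax ax'] /andP [bx bx'].
  rewrite /c' (negbTE ax) (negbTE ax') (negbTE bx) (negbTE bx').
  apply: Hc; rewrite ?inS' ?ax ?ax' ?bx ?bx' ?aS ?bS //=.
  by case/orP: Eab => ->; rewrite ?orbT.
Qed.

Definition Good (T : finType) (P : {set {set T}}) (S : {set T}) :=
  forall a b c, a \in S -> b \in S -> c \in S -> pblock P a = pblock P b ->
    pblock P a = pblock P c -> a != b -> a != c -> b = c.

Lemma bip_good (T : finType) (e : rel T) (P : {set {set T}}) S :
  (forall x y, pblock P x = pblock P y -> x != y -> e x y) ->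
  ind_bipartite e S -> Good P S.
Proof.
move=> Hc /existsP [A /andP [/andP [sub iA] iSA]].
have diff : forall u v, u \in S -> v \in S -> e u v -> (u \in A) != (v \in A).
  move=> u v uS vS euv; case uA: (u \in A); case vA: (v \in A) => //.
    by move: iA => /forall_inP /(_ u uA) /forall_inP /(_ v vA); rewrite euv.
  have uA' : u \in S :\: A by rewrite in_setD uA uS.
  have vA' : v \in S :\: A by rewrite in_setD vA vS.
  by move: iSA => /forall_inP /(_ u uA') /forall_inP /(_ v vA'); rewrite euv.
move=> a b c aS bS cS pab pac ab ac.
apply/eqP/negPn/negP => bc.
have h1 := diff a b aS bS (Hc a b pab ab).
have h2 := diff a c aS cS (Hc a c pac ac).
have h3 := diff b c bS cS (Hc b c (etrans (esym pab) pac) bc).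
by move: h1 h2 h3; case: (a \in A); case: (b \in A); case: (c \in A).
Qed.

Lemma good_bip (T : finType) (e : rel T) (P : {set {set T}}) S :
  simple_graph e ->
  (forall x y z, e x y -> e x z ->
           pblock P x != pblock P y -> pblock P x != pblock P z -> y = z) ->
  Good P S -> ind_bipartite e S.
Proof.
rewrite /simple_graph => -[se ie] Hm G.
pose r1 := [rel a b | (pblock P a == pblock P b) && (a != b)].
pose r2 := [rel a b | e a b && (pblock P a != pblock P b)].
have s1 : symmetric r1 by move=> a b /=; rewrite eq_sym (eq_sym a).
have s2 : symmetric r2 by move=> a b /=; rewrite se eq_sym.
have i1 : irreflexive r1 by move=> a; rewrite /r1 /= !eqxx.
have i2 : irreflexive r2 by move=> a /=; rewrite ie.
have f1 : fnl S r1.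
  move=> a b c aS bS cS; rewrite /r1 /=. move=> /andP [/eqP pab ab] /andP [/eqP pac ac]. exact: (G a b c aS bS cS pab pac ab ac).
have f2 : fnl S r2.
  move=> a b c aS bS cS; rewrite /r2 /= => /andP [eab pab] /andP [eac pac]; exact: (Hm a b c eab eac pab pac).
have [col Hcol] := bip2 (leqnn #|S|) s1 s2 i1 i2 f1 f2.
have E : forall x y, e x y -> r1 x y || r2 x y.
  move=> x y exy /=; rewrite exy /=.
  case: (eqVneq x y) => [xy|xy]; first by rewrite xy ie in exy.
  by case: (pblock P x == pblock P y).
apply/existsP; exists [set v in S | col v]; apply/andP; split; first (apply/andP; split).
- by apply/subsetP => v; rewrite inE => /andP [].
- apply/forall_inP => x; rewrite inE => /andP [xS cx]; apply/forall_inP => y.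
  rewrite inE => /andP [yS cy]; apply/negP => exy.
  by have := Hcol x y xS yS (E x y exy); rewrite cx cy.
- apply/forall_inP => x; rewrite !inE => /andP [nx xS]; have cx : ~~ col x by move: nx; rewrite xS.
  apply/forall_inP => y; rewrite !inE => /andP [ny yS]; have cy : ~~ col y by move: ny; rewrite yS.
  apply/negP => exy; have := Hcol x y xS yS (E x y exy).
  by rewrite (negbTE cx) (negbTE cy).
Qed.

Lemma three_elems (T : finType) (X : {set T}) : 2 < #|X| ->
  exists a b c, [/\ a \in X, b \in X, c \in X & [/\ a != b, a != c & b != c]].
Proof.
move=> h.
have [a aX] : exists a, a \in X.
  by apply/set0Pn; rewrite -card_gt0; apply: leq_trans h.
have h1 : 1 < #|X :\ a| by move: h; rewrite (cardsD1 a X) aX.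
have [b bX] : exists b, b \in X :\ a.
  by apply/set0Pn; rewrite -card_gt0; apply: leq_trans h1.
have h2 : 0 < #|X :\ a :\ b| by move: h1; rewrite (cardsD1 b (X :\ a)) bX.
have [c cX] : exists c, c \in X :\ a :\ b by apply/set0Pn; rewrite -card_gt0.
move: bX cX; rewrite !in_setD1 => /andP [ba bX] /and3P [cb ca cX].
exists a, b, c; split => //; split => //; by rewrite eq_sym.
Qed.

Lemma two_elems (T : finType) (X : {set T}) a b : a \in X -> b \in X -> a != b -> 1 < #|X|.
Proof.
move=> aX bX ab; have : #|[set a; b]| <= #|X|.
  by apply: subset_leq_card; apply/subsetP => v; rewrite !inE => /orP [] /eqP ->.
by rewrite cards2 ab.
Qed.

Lemma max_two (T : finType) (e : rel T) (P : {set {set T}}) S B :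
  simple_graph e -> partition P [set: T] ->
  (forall B, B \in P -> 2 <= #|B|) ->
  (forall x y, pblock P x = pblock P y -> x != y -> e x y) ->
  (forall x y z, e x y -> e x z ->
           pblock P x != pblock P y -> pblock P x != pblock P z -> y = z) ->
  maxset (ind_bipartite e) S -> B \in P ->
  #|[set x in S | pblock P x == B]| = 2.
Proof.
move=> sg /and3P [/eqP cov triv _] sz Hc Hm /maxsetP [bS maxS] BP.
have G := bip_good Hc bS.
set X := [set x in S | pblock P x == B].
have le2 : #|X| <= 2.
  rewrite leqNgt; apply/negP => /three_elems [a [b [c [aX bX cX [ab ac bc]]]]].
  move: aX bX cX; rewrite !inE => /andP [aS /eqP pa] /andP [bS' /eqP pb] /andP [cS /eqP pc].
  have := G a b c aS bS' cS (etrans pa (esym pb)) (etrans pa (esym pc)) ab ac.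
  by move=> e'; rewrite e' eqxx in bc.
have ge2 : 1 < #|X|.
  rewrite ltnNge; apply/negP => le1.
  have uniqX : forall b c, b \in S -> c \in S -> pblock P b = B -> pblock P c = B -> b = c.
    move=> b c bS' cS pb pc; apply/eqP/negPn/negP => bc.
    have bX : b \in X by rewrite inE bS' pb eqxx.
    have cX : c \in X by rewrite inE cS pc eqxx.
    by have := two_elems bX cX bc; rewrite ltnNge le1.
  have : ~~ (B \subset S).
    apply/negP => BS.
    have : B \subset X.
      apply/subsetP => x xB; rewrite inE (subsetP BS x xB) (def_pblock triv BP xB) eqxx //.
    move/subset_leq_card => h.
    by have := leq_trans (sz B BP) (leq_trans h le1).
  move/subsetPn => [v vB vS].
  have pv : pblock P v = B := def_pblock triv BP vB.
  have G' : Good P (v |: S).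
    move=> a b c; rewrite !in_setU1.
    move=> /orP [/eqP ea | aS] /orP [/eqP eb | bS'] /orP [/eqP ec | cS] pab pac ab ac.
    - by rewrite ea eb eqxx in ab.
    - by rewrite ea eb eqxx in ab.
    - by rewrite ea ec eqxx in ac.
    - apply: uniqX => //; [rewrite -pab | rewrite -pac]; by rewrite ea.
    - by rewrite eb ec.
    - have := uniqX a c aS cS; rewrite pab eb pv => h.
      by have := h erefl; rewrite -pac pab eb pv => /(_ erefl) e'; rewrite e' eqxx in ac.
    - have := uniqX a b aS bS'; rewrite pac ec pv => h.
      by have := h erefl; rewrite -pab pac ec pv => /(_ erefl) e'; rewrite e' eqxx in ab.
    - exact: (G a b c aS bS' cS pab pac ab ac).
  have := maxS _ (good_bip sg Hm G') (subsetUr _ _).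
  by move=> e'; move: vS; rewrite -e' setU11.
by apply/eqP; rewrite eqn_leq le2 ge2.
Qed.

Theorem mainTheorem14 (T : finType) (e : rel T) :
  simple_graph e -> cliques_plus_matching e -> well_bicovered e.
Proof.
move=> sg [P [part sz Hc Hm]].
have cov : cover P = [set: T] by case/and3P: part => /eqP.
have cnt : forall S, maxset (ind_bipartite e) S -> #|S| = #|P| * 2.
  move=> S mS.
  rewrite -sum1_card (partition_big (pblock P) (fun B => B \in P)) /=; last first.
    by move=> x _; apply: pblock_mem; rewrite cov in_setT.
  rewrite -sum_nat_const; apply: eq_bigr => B BP.
  rewrite -(max_two sg part sz Hc Hm mS BP) -sum1_card; apply: eq_bigl => x.
  by rewrite inE.
by move=> S1 S2 m1 m2; rewrite (cnt S1 m1) (cnt S2 m2).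
Qed.
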